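(* Let $X$ be a non-empty finite set and $\mathcal{P}$ a partition of $X$. Let $s$ be the number of distinct sizes of blocks of $\mathcal{P}$, and let $r$ be the number of sizes $m$ such that $\mathcal{P}$ has at least two blocks of size $m$. Then $\operatorname{rank}(T(X,\mathcal{P}):\Sigma(X,\mathcal{P}))=\binom{s}{2}+r$.
   Context: $T(X,\mathcal{P})$ is the semigroup (under composition) of maps $f:X\to X$ such that for every block $P$ of $\mathcal{P}$ there is a block $Q$ with $Pf\subseteq Q$; $\Sigma(X,\mathcal{P})$ is the subsemigroup of those $f\in T(X,\mathcal{P})$ whose image intersects every block of $\mathcal{P}$. For a subsemigroup $U$ of a semigroup $V$, the relative rank $\operatorname{rank}(V:U)$ is the least cardinality of a subset $W\subseteq V$ such that $U\cup W$ generates $V$ as a semigroup. *)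

(* Defs.v *)
From mathcomp Require Import all_boot.
Set Implicit Arguments. Unset Strict Implicit. Unset Printing Implicit Defensive.

Section Defs.
Variable X : finType.

Definition TXP (P : {set {set X}}) : {set {ffun X -> X}} :=
  [set f : {ffun X -> X} | [forall B in P, exists C in P, f @: B \subset C]].

Definition SigmaXP (P : {set {set X}}) : {set {ffun X -> X}} :=
  [set f in TXP P | [forall B in P, exists x, f x \in B]].

(* composition of a sequence of maps (applied left to right: x(a1 a2 ... an)) *)
Definition seq_comp (s : seq {ffun X -> X}) : {ffun X -> X} :=
  foldr (fun (g acc : {ffun X -> X}) => [ffun x => acc (g x)] : {ffun X -> X}) ([ffun x => x] : {ffun X -> X}) s.

Definition in_sgp_gen (A : {set {ffun X -> X}}) (f : {ffun X -> X}) : Prop :=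
  exists s : seq {ffun X -> X}, [/\ s != [::], all (fun g => g \in A) s & f = seq_comp s].

Definition generates_with (V U W : {set {ffun X -> X}}) : Prop :=
  forall f, f \in V <-> in_sgp_gen (U :|: W) f.

Definition relative_rank_eq (V U : {set {ffun X -> X}}) (k : nat) : Prop :=
  (exists W : {set {ffun X -> X}}, [/\ W \subset V, generates_with V U W & #|W| = k]) /\
  (forall W : {set {ffun X -> X}}, W \subset V -> generates_with V U W -> k <= #|W|).

Definition block_sizes (P : {set {set X}}) : seq nat :=
  undup [seq #|B| | B : {set X} <- enum P].

Definition repeated_sizes (P : {set {set X}}) : nat :=
  size [seq m <- block_sizes P | 1 < #|[set B in P | #|B| == m]| ].
End Defs.

(* Main.v *)
Require Import Defs.
From mathcomp Require Import all_boot.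
From mathcomp Require Import zify.
From Stdlib Require Import ClassicalEpsilon.
Set Implicit Arguments. Unset Strict Implicit. Unset Printing Implicit Defensive.


Lemma assign (T : finType) (d s : T -> nat) n : forall (A B : {set T}), #|A| = n ->
  (forall t, #|[set a in A | t <= d a]| <= #|[set b in B | t <= s b]|) ->
  exists pi : T -> T, {in A &, injective pi} /\
     (forall a, a \in A -> pi a \in B /\ d a <= s (pi a)).
Proof.
elim: n => [|n IH] A B cA H.
  exists id; split; first by move=> ? ? _ _.
  by move=> a aA; move/eqP: cA; rewrite cards_eq0 => /eqP A0; rewrite A0 inE in aA.
have [a0 a0A] : exists a, a \in A.
  by apply/set0Pn; rewrite -card_gt0 cA.
case: (@arg_maxnP T a0 (mem A) d a0A) => am amA0 amM.
have amA : am \in A := amA0.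
have : 0 < #|[set b in B | d am <= s b]|.
  apply: leq_trans (H (d am)); rewrite card_gt0; apply/set0Pn; exists am.
  by rewrite inE amA leqnn.
rewrite card_gt0 => /set0Pn [bm].
rewrite inE => /andP[bmB lbm].
have cA' : #|A :\ am| = n by move: cA; rewrite (cardsD1 am) amA add1n => -[].
have Ht : forall t, #|[set a in A :\ am | t <= d a]| <= #|[set b in B :\ bm | t <= s b]|.
  move=> t; case: (leqP t (d am)) => ht.
    have e1 : #|[set a in A | t <= d a]| = #|[set a in A :\ am | t <= d a]|.+1.
      rewrite (cardsD1 am [set a in A | t <= d a]) inE amA ht add1n; congr _.+1.
      by apply: eq_card => x; rewrite !inE andbA.
    have e2 : #|[set b in B | t <= s b]| = #|[set b in B :\ bm | t <= s b]|.+1.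
      rewrite (cardsD1 bm [set b in B | t <= s b]) inE bmB (leq_trans ht lbm) add1n; congr _.+1.
      by apply: eq_card => x; rewrite !inE andbA.
    by have := H t; rewrite e1 e2 ltnS.
  suff -> : [set a in A :\ am | t <= d a] = set0 by rewrite cards0.
  apply/setP => x; rewrite !inE; apply/negbTE; apply/negP => /andP[/andP[_ xA] tx].
  by have := leq_trans ht (leq_trans tx (amM x xA)); rewrite ltnn.

have [pi [pinj pP]] := IH (A :\ am) (B :\ bm) cA' Ht.
  exists (fun a => if a == am then bm else pi a); split.
    move=> x y xA yA /=.
    case: (boolP (x == am)) => [/eqP->|xn]; case: (boolP (y == am)) => [/eqP->|yn] //; rewrite ?eqxx ?(negbTE xn) ?(negbTE yn).
    - by move=> e; have := pP y; rewrite !inE yn yA e eqxx => /(_ isT) [].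
    - by move=> e; have := pP x; rewrite !inE xn xA -e eqxx => /(_ isT) [].
    by apply: pinj; rewrite !inE ?xn ?yn.
  move=> a aA /=; case: (boolP (a == am)) => [/eqP->|an]; first by rewrite ?eqxx.
  have [h1 h2] : pi a \in B :\ bm /\ d a <= s (pi a) by apply: pP; rewrite !inE an aA.
  by move: h1; rewrite !inE => /andP[_ ->].
Qed.

Lemma card_val_seq n (s : seq nat) : uniq s -> all (fun m => m < n.+1) s ->
  #|[set z : 'I_n.+1 | nat_of_ord z \in s]| = size s.
Proof.
elim: s => [|a s IH] /=.
  by move=> _ _; apply: eq_card0 => z; rewrite inE.
case/andP => an us /andP[la ls].
have -> : [set z : 'I_n.+1 | nat_of_ord z \in a :: s] = inord a |: [set z : 'I_n.+1 | nat_of_ord z \in s].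
  apply/setP => z; rewrite !inE; congr (_ || _).
  apply/eqP/eqP => [e|->]; last by rewrite inordK.
  by apply: ord_inj; rewrite inordK.
by rewrite cardsU1 IH // inE inordK // an.
Qed.

Section Basics.
Variable X : finType.
Variable P : {set {set X}}.
Hypothesis hP : partition P [set: X].
Variable x0 : X.
Definition repr (C : {set X}) : X := odflt x0 [pick x in C].

Lemma triv : trivIset P.
Proof. by case/and3P: hP. Qed.

Lemma cov x : x \in cover P.
Proof. by case/and3P: hP => /eqP -> _ _; rewrite inE. Qed.

Definition bl x := pblock P x.

Lemma blP x : bl x \in P.
Proof. exact: pblock_mem (cov x). Qed.

Lemma mem_bl x : x \in bl x.
Proof. by rewrite /bl mem_pblock cov. Qed.

Lemma bl_eq C x : C \in P -> x \in C -> bl x = C.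
Proof. by move=> CP xC; apply: def_pblock triv CP xC. Qed.

Lemma reprP C : C \in P -> repr C \in C.
Proof.
move=> CP; rewrite /repr; case: pickP => [y //|H].
case/and3P: hP => _ _ n0.
have C0 : C = set0 by apply/setP => y; rewrite inE H.
by move: n0; rewrite -C0 CP.
Qed.

Lemma bl_repr C : C \in P -> bl (repr C) = C.
Proof. by move=> CP; apply: bl_eq CP (reprP CP). Qed.

Lemma inC_bl C x : C \in P -> (x \in C) = (bl x == C).
Proof.
move=> CP; apply/idP/eqP => [xC|<-]; first exact: bl_eq.
exact: mem_bl.
Qed.

Lemma TP (f : {ffun X -> X}) :
  reflect (forall x y, bl x = bl y -> bl (f x) = bl (f y)) (f \in TXP P).
Proof.
apply: (iffP idP).
  rewrite inE => /forall_inP H x y exy.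
  have [C /andP[CP sC]] := existsP (H _ (blP x)).
  have fx : f x \in C by apply: (subsetP sC); apply: imset_f; apply: mem_bl.
  have fy : f y \in C by apply: (subsetP sC); apply: imset_f; rewrite exy; apply: mem_bl.
  by rewrite (bl_eq CP fx) (bl_eq CP fy).
move=> H; rewrite inE; apply/forall_inP => B BP; apply/existsP.
exists (bl (f (repr B))); rewrite blP /=; apply/subsetP => z /imsetP[y yB ->].
rewrite inC_bl ?blP //; apply/eqP/H.
by rewrite (bl_eq BP yB) bl_repr.
Qed.

Definition comp (f g : {ffun X -> X}) : {ffun X -> X} := [ffun x => g (f x)].

Lemma compE f g x : comp f g x = g (f x).
Proof. by rewrite ffunE. Qed.

Lemma comp_T f g : f \in TXP P -> g \in TXP P -> comp f g \in TXP P.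
Proof.
move=> /TP Hf /TP Hg; apply/TP => x y e; rewrite !compE; exact/Hg/Hf.
Qed.

Lemma seq_comp_cons (g : {ffun X -> X}) s : seq_comp (g :: s) = comp g (seq_comp s).
Proof. by []. Qed.

Lemma seq_comp1 (g : {ffun X -> X}) : seq_comp [:: g] = g.
Proof. by apply/ffunP => x; rewrite /= !ffunE. Qed.

Lemma seq_comp_cat (s1 s2 : seq {ffun X -> X}) : seq_comp (s1 ++ s2) = comp (seq_comp s1) (seq_comp s2).
Proof.
elim: s1 => [|g s IH] /=; first by apply/ffunP => x; rewrite !ffunE.
by apply/ffunP => x; rewrite IH !ffunE.
Qed.

Lemma SigmaP f : reflect (f \in TXP P /\ forall B, B \in P -> exists x, f x \in B) (f \in SigmaXP P).
Proof.
rewrite [X in reflect _ X]inE; apply: (iffP idP) => [H0|[fT H]].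
  have /andP[fT H1] := H0; split=> // B BP.
  by have /existsP := forall_inP H1 B BP.
rewrite fT /=; apply/forall_inP => B /H [x fx]; by apply/existsP; exists x.
Qed.

Lemma Sigma_T f : f \in SigmaXP P -> f \in TXP P.
Proof. by case/SigmaP. Qed.

Section Gen.
Variable W : {set {ffun X -> X}}.
Definition gen f := in_sgp_gen (SigmaXP P :|: W) f.

Lemma gen_comp f g : gen f -> gen g -> gen (comp f g).
Proof.
move=> [s1 [n1 a1 ->]] [s2 [n2 a2 ->]]; exists (s1 ++ s2); split.
- by case: s1 n1 a1.
- by rewrite all_cat a1 a2.
- by rewrite seq_comp_cat.
Qed.

Lemma gen1 g : g \in SigmaXP P :|: W -> gen g.
Proof. by move=> gS; exists [:: g]; rewrite seq_comp1 /= gS. Qed.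

Lemma gen_T f : W \subset TXP P -> gen f -> f \in TXP P.
Proof.
move=> WT [s [_ a ->]]; elim: s a => [|g s IH] /=.
  by move=> _; apply/TP => x y; rewrite !ffunE.
case/andP => gin /IH sT; apply: comp_T sT.
by case/setUP: gin => [/Sigma_T|/(subsetP WT)].
Qed.
End Gen.


Definition fb (f : {ffun X -> X}) (C : {set X}) := bl (f (repr C)).

Lemma fbE f x : f \in TXP P -> fb f (bl x) = bl (f x).
Proof. by move=> /TP fT; apply: fT; rewrite bl_repr // blP. Qed.

Lemma fbE' f C x : f \in TXP P -> C \in P -> x \in C -> fb f C = bl (f x).
Proof. by move=> fT CP xC; rewrite -(bl_eq CP xC) fbE. Qed.

Lemma fbP f C : fb f C \in P.
Proof. exact: blP. Qed.

Definition hits (f : {ffun X -> X}) : {set {set X}} := (fun x => bl (f x)) @: [set: X].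

Lemma hitsP f : hits f \subset P.
Proof. by apply/subsetP => B /imsetP[x _ ->]; apply: blP. Qed.

Definition elem (B0 B0' : {set X}) : {ffun X -> X} :=
  [ffun y => if y \in B0 then nth y (enum B0') (index y (enum B0)) else y].

Lemma mem_bl_eq x y : x \in bl y -> bl x = bl y.
Proof. by move=> xy; apply: bl_eq xy; apply: blP. Qed.

Lemma surj_of_inj (S : {set {set X}}) (pi : {set X} -> {set X}) :
  {in S, forall C, pi C \in S} -> {in S &, injective pi} -> forall B, B \in S ->
  exists2 C, C \in S & B = pi C.
Proof.
move=> piP piI B BP.
have e : pi @: S = S.
  apply/eqP; rewrite eqEcard card_in_imset // leqnn andbT.
  by apply/subsetP => z /imsetP[C CP ->]; apply: piP.
by move: BP; rewrite -{1}e => /imsetP[C CP ->]; exists C.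
Qed.

Lemma imP_surj (pi : {set X} -> {set X}) :
  {in P, forall C, pi C \in P} -> {in P &, injective pi} -> forall B, B \in P ->
  exists2 C, C \in P & B = pi C.
Proof. exact: surj_of_inj. Qed.

Section Reduce.
Variables (f : {ffun X -> X}) (pi : {set X} -> {set X}) (Bs Bt B0 B0' M : {set X}).
Hypotheses (fT : f \in TXP P) (piP : {in P, forall C, pi C \in P}) (piI : {in P &, injective pi})
  (BsP : Bs \in P) (BtP : Bt \in P) (Bst : Bs != Bt) (merged : fb f Bs = fb f Bt)
  (piBs : pi Bs = B0) (piBt : pi Bt = B0')
  (dC : forall C, C \in P -> C != Bs -> C != Bt -> #|f @: C| <= #|pi C|)
  (dBs : #|f @: Bs| <= #|B0|) (dBt : #|f @: (Bs :|: Bt)| <= #|B0'|)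
  (MP : M \in P) (Mn : forall x, bl (f x) != M).

Let L := enum (f @: Bs) ++ enum (f @: Bt :\: f @: Bs).
Let ispair x := (bl x == Bs) || (bl x == Bt).
Let Lx x := if ispair x then L else enum (f @: bl x).
Let tg x := if ispair x then B0' else pi (bl x).
Let ix x := index (f x) (Lx x).

Lemma L_uniq : uniq L.
Proof.
rewrite cat_uniq !enum_uniq /= andbT; apply/hasPn => v.
by rewrite !mem_enum !inE => /andP[/negbTE -> _].
Qed.

Lemma size_L : size L = #|f @: (Bs :|: Bt)|.
Proof.
rewrite size_cat -!cardE imsetU cardsU cardsD [f @: Bt :&: _]setIC addnBA //.
by rewrite subset_leq_card ?subsetIr.
Qed.

Lemma mem_L x : ispair x -> f x \in L.
Proof.
rewrite /ispair mem_cat !mem_enum !inE.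
case/orP => /eqP <-; first by rewrite imset_f ?mem_bl.
by rewrite (imset_f f (mem_bl x)) andbT orbN.
Qed.


Lemma ix_lt x : ix x < #|tg x|.
Proof.
rewrite /ix /Lx /tg; case: ifP => px.
  by apply: leq_trans dBt; rewrite -size_L index_mem mem_L.
apply: leq_trans (dC (blP x) _ _).
- by rewrite cardE index_mem mem_enum imset_f ?mem_bl.
- by apply/negP => e; rewrite /ispair e in px.
- by apply/negP => e; rewrite /ispair e orbT in px.
Qed.

Lemma ix_Bs x : bl x = Bs -> ix x < #|B0|.
Proof.
move=> e; have fxB : f x \in f @: Bs by rewrite -e imset_f ?mem_bl.
rewrite /ix /Lx /ispair e eqxx /= /L index_cat mem_enum fxB; apply: leq_trans dBs.
by rewrite cardE index_mem mem_enum.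
Qed.

Lemma tgP x : tg x \in P.
Proof. rewrite /tg; case: ifP => _; [rewrite -piBt; apply: piP BtP | apply: piP (blP x)]. Qed.

Lemma tg_nBs x : bl x != Bs -> tg x = pi (bl x).
Proof. by rewrite /tg /ispair => /negbTE ->; case: eqP => // ->. Qed.

Definition sig : {ffun X -> X} := [ffun x => nth x (enum (pi (bl x))) (ix x)].

Lemma ix_pi x : ix x < #|pi (bl x)|.
Proof.
case: (boolP (bl x == Bs)) => [/eqP e|ne].
  by rewrite e piBs; apply: ix_Bs.
by rewrite -tg_nBs // ix_lt.
Qed.

Lemma sig_in x : sig x \in pi (bl x).
Proof. by rewrite ffunE -mem_enum; apply: mem_nth; rewrite -cardE ix_pi. Qed.

Lemma sigS : sig \in SigmaXP P.
Proof.
apply/SigmaP; split.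
  apply/TP => x y e.
  rewrite (bl_eq (piP (blP x)) (sig_in x)) (bl_eq (piP (blP y)) (sig_in y)).
  by rewrite e.
move=> B BP; have [C CP ->] := imP_surj piP piI BP.
by exists (repr C); have := sig_in (repr C); rewrite bl_repr.
Qed.

Lemma h_eq x : elem B0 B0' (sig x) = nth x (enum (tg x)) (ix x).
Proof.
rewrite ffunE; case: (boolP (bl x == Bs)) => [/eqP e|ne].
  have sB0 : sig x \in B0 by rewrite -piBs -e sig_in.
  have sx : sig x = nth x (enum B0) (ix x) by rewrite ffunE e piBs.
  rewrite sB0 /tg /ispair e eqxx /= {2}sx index_uniq ?enum_uniq //.
    by apply: set_nth_default; rewrite -cardE; apply: leq_trans (ix_lt x) _; rewrite /tg /ispair e eqxx.
  by rewrite -cardE -piBs -e ix_pi.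
have -> : (sig x \in B0) = false.
  apply/negbTE/negP => sB.
  have e1 := bl_eq (piP (blP x)) (sig_in x).
  have e2 : bl (sig x) = B0 by apply: bl_eq sB; rewrite -piBs piP.
  by move: ne; rewrite -(piI (blP x) BsP) ?eqxx // -e1 e2 piBs.
by rewrite tg_nBs // ffunE.
Qed.

Lemma h_in x : elem B0 B0' (sig x) \in tg x.
Proof. by rewrite h_eq -mem_enum; apply: mem_nth; rewrite -cardE ix_lt. Qed.

Lemma bl_h x : bl (elem B0 B0' (sig x)) = tg x.
Proof. exact: bl_eq (tgP x) (h_in x). Qed.

Lemma tg_inj x y : tg x = tg y -> ispair x = ispair y /\ (~~ ispair x -> bl x = bl y).
Proof.
rewrite /tg; case: (boolP (ispair x)) => px; case: (boolP (ispair y)) => py //.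
- move=> e; exfalso; move: py; rewrite /ispair negb_or => /andP[n1 n2].
  by move: n2; rewrite (piI BtP (blP y)) ?eqxx // piBt.
- move=> e; exfalso; move: px; rewrite /ispair negb_or => /andP[n1 n2].
  by move: n2; rewrite (piI (blP x) BtP) ?eqxx // piBt.
by move=> e; split=> // _; apply: piI (blP x) (blP y) e.
Qed.

Lemma K2 x y : elem B0 B0' (sig x) = elem B0 B0' (sig y) -> f x = f y.
Proof.
move=> e.
have etg : tg x = tg y by rewrite -bl_h e bl_h.
have [ep eb] := tg_inj etg.
have eL : Lx x = Lx y.
  rewrite /Lx ep; case: ifP => // py; rewrite eb //; by rewrite ep py.
move: e; rewrite !h_eq etg (set_nth_default x) -?cardE -?etg ?ix_lt //.
move/eqP; rewrite nth_uniq ?enum_uniq -?cardE ?ix_lt -?etg ?ix_lt //.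
rewrite /ix eL => /eqP ei.
have fxL : f x \in Lx y.
  rewrite -eL /Lx; case: ifP => px; first exact: mem_L.
  by rewrite mem_enum imset_f ?mem_bl.
have fyL : f y \in Lx y.
  rewrite /Lx; case: ifP => py; first exact: mem_L.
  by rewrite mem_enum imset_f ?mem_bl.
rewrite -(nth_index x fxL) ei nth_index //.
all: by rewrite etg ix_lt.
Qed.

Lemma K1 x y : bl (elem B0 B0' (sig x)) = bl (elem B0 B0' (sig y)) -> bl (f x) = bl (f y).
Proof.
rewrite !bl_h => etg; have [ep eb] := tg_inj etg.
case: (boolP (ispair x)) => px; last by rewrite -!fbE // eb.
have py : ispair y by rewrite -ep.
have pfx : forall z, ispair z -> bl (f z) = fb f Bs.
  move=> z; rewrite -fbE // /ispair => /orP[]/eqP -> //.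
by rewrite !pfx.
Qed.

Lemma tg_nB0 x : tg x != B0.
Proof.
rewrite /tg; case: ifP => px.
  by apply/eqP => e; move: Bst; rewrite -(piI BsP BtP) ?eqxx // piBs piBt e.
apply/eqP => e; move: px; rewrite /ispair -(piI (blP x) BsP) ?eqxx //.
by rewrite e piBs.
Qed.


Let h := comp sig (elem B0 B0').
Let m0 := repr M.
Definition gg : {ffun X -> X} := [ffun z =>
  if [pick x | h x == z] is Some x then f x else
  if [pick x | bl (h x) == bl z] is Some x then f x else m0].

Lemma hE x : h x = elem B0 B0' (sig x).
Proof. by rewrite /h compE. Qed.

Lemma g_spec z : (exists x, bl (h x) = bl z /\ gg z = f x) \/
   ((forall x, bl (h x) != bl z) /\ gg z = m0).
Proof.
rewrite /gg ffunE; case: pickP => [x /eqP e|_].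
  by left; exists x; rewrite e.
case: pickP => [x /eqP e|H]; first by left; exists x.
by right; split=> // x; rewrite H.
Qed.

Lemma gT : gg \in TXP P.
Proof.
apply/TP => z z' e.
case: (g_spec z) => [[x [ex ->]]|[nx ->]]; case: (g_spec z') => [[y [ey ->]]|[ny ->]] //.
- by apply: K1; rewrite -!hE ex ey.
- by move: (ny x); rewrite ex e eqxx.
- by move: (nx y); rewrite ey e eqxx.
Qed.

Lemma ghf x : gg (h x) = f x.
Proof.
rewrite /gg ffunE; case: pickP => [y /eqP e|H]; first by apply: K2; rewrite -!hE.
by move: (H x); rewrite eqxx.
Qed.

Lemma hits_lt : #|hits f| < #|hits gg|.
Proof.
apply: proper_card; apply/properP; split.
  apply/subsetP => B /imsetP[x _ ->]; apply/imsetP; exists (h x) => //.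
  by rewrite ghf.
exists M.
  apply/imsetP; exists (repr B0) => //.
  have B0P : B0 \in P by rewrite -piBs piP.
  case: (g_spec (repr B0)) => [[x [ex _]]|[_ ->]].
    by move: (tg_nB0 x); rewrite -bl_h -hE ex bl_repr ?eqxx.
  by rewrite /m0 bl_repr.
by apply/imsetP => -[x _ e]; move: (Mn x); rewrite e eqxx.
Qed.

Lemma reduce : exists sg g, [/\ sg \in SigmaXP P, g \in TXP P, #|hits f| < #|hits g| &
   f = comp (comp sg (elem B0 B0')) g].
Proof.
exists sig, gg; split; [exact: sigS | exact: gT | exact: hits_lt |].
by apply/ffunP => x; rewrite compE -/h ghf.
Qed.

End Reduce.

Lemma imset_fb f C : f \in TXP P -> C \in P -> f @: C \subset fb f C.
Proof.
move=> fT CP; apply/subsetP => z /imsetP[y yC ->].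
by rewrite (fbE' fT CP yC) mem_bl.
Qed.

Lemma card_fb f C : f \in TXP P -> C \in P -> #|f @: C| <= #|fb f C|.
Proof. by move=> fT CP; apply: subset_leq_card; apply: imset_fb. Qed.

Section Threshold.
Variables (f : {ffun X -> X}) (B1 B2 Bm : {set X}).
Hypotheses (fT : f \in TXP P) (B1P : B1 \in P) (B2P : B2 \in P) (B12 : B1 != B2)
  (mg : fb f B1 = fb f B2) (imgle : #|f @: B2| <= #|f @: B1|)
  (maxP : forall C C', C \in P -> C' \in P -> C != C' -> fb f C = fb f C' -> #|C| <= #|Bm|)
  (Bm12 : Bm = B1 \/ Bm = B2).

Definition dem (C : {set X}) := if C == B1 then #|f @: (B1 :|: B2)| else #|f @: C|.

Lemma threshold t : #|[set C in P | t <= dem C]| <= #|[set C in P | t <= #|C|]|.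
Proof.
have sub : forall C, C \in P -> C != B1 -> t <= dem C -> t <= #|C|.
  move=> C CP nC; rewrite /dem (negbTE nC) => h; exact: leq_trans h (leq_imset_card _ _).
case: (boolP ((t <= #|B1|) || ~~ (t <= dem B1))) => [hA|].
  apply: subset_leq_card; apply/subsetP => C; rewrite !inE => /andP[CP tC]; rewrite CP /=.
  case: (boolP (C == B1)) => [/eqP e|nC]; last exact: sub CP nC tC.
  by move: hA; rewrite -e tC orbF.
rewrite negb_or negbK -ltnNge => /andP[ltB1 tB1].
set Dm := [set C in P | t <= dem C]; set G := [set C in P | t <= #|C|].
suff [C0 C0G C0D] : exists2 C0, C0 \in G & C0 \notin Dm.
  have sD : Dm \subset B1 |: (G :\ C0).
    apply/subsetP => C /setIdP[CP tC].
    case: (boolP (C == B1)) => [/eqP->|nC]; first by rewrite setU11.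
    rewrite setU1r // !inE CP (sub C CP nC tC) !andbT.
    by apply/eqP => e; move: C0D; rewrite -e inE CP tC.
  apply: leq_trans (subset_leq_card sD) _.
  rewrite cardsU1 (cardsD1 C0 G) C0G add1n.
  by case: (B1 \notin _).
case: (leqP t #|B2|) => [tB2|ltB2].
  exists B2; first by rewrite inE B2P tB2.
  rewrite inE B2P /= /dem eq_sym (negbTE B12) -ltnNge.
  exact: leq_ltn_trans imgle (leq_ltn_trans (leq_imset_card _ _) ltB1).
have ltBm : #|Bm| < t by case: Bm12 => ->.
case: (boolP [exists C in G, C \notin Dm]) => [/exists_inP[C CG CD]|nE].
  by exists C.
exfalso.
have GD : forall C, C \in G -> t <= #|f @: C|.
  move=> C CG; have CD : C \in Dm by apply/negPn; apply/negP => CD; move/exists_inP: nE; apply; exists C.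
  move: CD CG; rewrite !inE /dem => /andP[CP tC] /andP[_ tCs].
  case: eqP tC => [e|_ //]; by move: tCs; rewrite e leqNgt ltB1.
have GP : forall C, C \in G -> C \in P by move=> C; rewrite inE => /andP[].
have fbG : {in G, forall C, fb f C \in G}.
  move=> C CG; rewrite inE fbP /=; apply: leq_trans (GD C CG) (card_fb fT (GP C CG)).
have nB1 : forall C, C \in G -> C != B1.
  by move=> C; rewrite inE => /andP[_ tC]; apply/eqP => e; move: tC; rewrite e leqNgt ltB1.
case: (boolP [exists C in G, exists C' in G, (C != C') && (fb f C == fb f C')]).
  case/exists_inP => C CG /exists_inP[C' C'G /andP[nCC /eqP e]].
  have := maxP (GP C CG) (GP C' C'G) nCC e.
  by rewrite leqNgt; move: CG; rewrite inE => /andP[_ tC]; rewrite (leq_trans ltBm tC).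
move=> nI.
have inj : {in G &, injective (fb f)}.
  move=> C C' CG C'G e; apply/eqP; apply/negPn/negP => nCC.
  by move/negP: nI; apply; apply/exists_inP; exists C => //; apply/exists_inP; exists C' => //; rewrite nCC e eqxx.
have fB1G : fb f B1 \in G.
  rewrite inE fbP /=; apply: leq_trans tB1 _; rewrite /dem eqxx.
  apply: subset_leq_card; apply/subsetP => z /imsetP[y]; rewrite inE => /orP[] yB ->.
    by rewrite (fbE' fT B1P yB) mem_bl.
  by rewrite mg (fbE' fT B2P yB) mem_bl.
have [C CG eC] := surj_of_inj fbG inj fB1G.
have := maxP (GP C CG) B1P (nB1 C CG) (esym eC).
by rewrite leqNgt; move: CG; rewrite inE => /andP[_ tC]; rewrite (leq_trans ltBm tC).
Qed.
End Threshold.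

Definition sw (a b C : {set X}) := if C == a then b else if C == b then a else C.

Lemma swK (a b : {set X}) : involutive (sw a b).
Proof.
move=> C; rewrite /sw.
case: (C =P a) => [->|na]; first by rewrite eqxx; case: (b =P a) => [->|] //; rewrite eqxx.
case: (C =P b) => [->|nb]; first by rewrite eqxx.
by move/eqP/negbTE: na => ->; move/eqP/negbTE: nb => ->.
Qed.

Lemma sw_inj (a b : {set X}) : injective (sw a b).
Proof. exact: inv_inj (swK a b). Qed.

Lemma swP (a b C : {set X}) : a \in P -> b \in P -> C \in P -> sw a b C \in P.
Proof. by rewrite /sw => aP bP CP; case: ifP => //; case: ifP. Qed.

Lemma sw_card (a b C : {set X}) : #|a| = #|b| -> #|sw a b C| = #|C|.
Proof. by rewrite /sw => e; case: (C =P a) => [->|_] //; case: (C =P b) => [->|_]. Qed.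

Lemma swl (a b : {set X}) : sw a b a = b.
Proof. by rewrite /sw eqxx. Qed.

Lemma sw_other (a b C : {set X}) : C != a -> C != b -> sw a b C = C.
Proof. by rewrite /sw => /negbTE -> /negbTE ->. Qed.

Lemma swap2 (E E' B0 B0' : {set X}) : E \in P -> E' \in P -> B0 \in P -> B0' \in P -> E != E' -> B0 != B0' ->
  #|E| = #|B0| -> #|E'| = #|B0'| ->
  exists rho : {set X} -> {set X}, [/\ {in P, forall C, rho C \in P}, {in P &, injective rho},
     rho E = B0, rho E' = B0' & forall C, #|rho C| = #|C|].
Proof.
move=> EP E'P B0P B0'P nE nB cE cE'.
set E2 := sw E B0 E'.
have cE2 : #|E2| = #|B0'|.
  rewrite /E2 /sw; case: (E' =P E) => [e|_]; first by rewrite e eqxx in nE.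
  by case: (E' =P B0) => [e|_] //; rewrite cE -cE' e.
exists (fun C => sw E2 B0' (sw E B0 C)); split.
- by move=> C CP; apply: swP; rewrite ?swP.
- by move=> C C' _ _ /sw_inj /sw_inj.
- rewrite swl sw_other //.
  by rewrite /E2 -{1}(swl E B0) (inj_eq (@sw_inj _ _)).
- by rewrite swl.
- by move=> C; rewrite sw_card ?sw_card.
Qed.

Lemma merge_exists f : f \in TXP P -> forall M, M \in P -> (forall x, bl (f x) != M) ->
  exists C, exists C', [/\ C \in P, C' \in P, C != C' & fb f C = fb f C'].
Proof.
move=> fT M MP Mn.
case: (boolP [exists C in P, exists C' in P, (C != C') && (fb f C == fb f C')]).
  case/exists_inP => C CP /exists_inP[C' C'P /andP[nC /eqP e]]; by exists C, C'.
move=> nI.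
have inj : {in P &, injective (fb f)}.
  move=> C C' CP C'P e; apply/eqP; apply/negPn/negP => nCC.
  by move/negP: nI; apply; apply/exists_inP; exists C => //; apply/exists_inP; exists C' => //; rewrite nCC e eqxx.
have [C CP eC] := imP_surj (fun C _ => fbP f C) inj MP.
by move: (Mn (repr C)); rewrite eC eqxx.
Qed.

Lemma maxpair f : (exists C, exists C', [/\ C \in P, C' \in P, C != C' & fb f C = fb f C']) ->
  exists B, exists B', [/\ B \in P, B' \in P, B != B', fb f B = fb f B' &
    forall C C', C \in P -> C' \in P -> C != C' -> fb f C = fb f C' -> #|C| <= #|B|].
Proof.
move=> [C [C' [CP C'P nC e]]].
set S := [set p : {set X} * {set X} | [&& p.1 \in P, p.2 \in P, p.1 != p.2 & fb f p.1 == fb f p.2]].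
have pS : (C, C') \in S by rewrite inE /= CP C'P nC e eqxx.
case: (@arg_maxnP _ (C, C') (mem S) (fun p => #|p.1|) pS) => [[B B']] pm0 pM.
have : (B, B') \in S := pm0.
rewrite inE /= => /and4P[BP B'P nB /eqP eB].
exists B, B'; split=> // D D' DP D'P nD eD.
have DS : (D, D') \in S by rewrite inE /= DP D'P nD eD eqxx.
exact: (pM (D, D') DS).
Qed.

Section Upper.
Variable W : {set {ffun X -> X}}.
Hypothesis genW : forall E E', E \in P -> E' \in P -> E != E' -> #|E| <= #|E'| ->
  exists B0, exists B0', [/\ B0 \in P, B0' \in P, B0 != B0', (#|B0| = #|E| /\ #|B0'| = #|E'|) &
    elem B0 B0' \in W].

Definition stepC f := exists sg, exists w, exists g,
  [/\ sg \in SigmaXP P, w \in W, g \in TXP P, #|hits f| < #|hits g| & f = comp (comp sg w) g].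

Lemma finish f pi (Bs Bt M : {set X}) : f \in TXP P -> {in P, forall C, pi C \in P} -> {in P &, injective pi} ->
  Bs \in P -> Bt \in P -> Bs != Bt -> fb f Bs = fb f Bt ->
  (forall C, C \in P -> C != Bs -> C != Bt -> #|f @: C| <= #|pi C|) ->
  #|f @: Bs| <= #|pi Bs| -> #|f @: (Bs :|: Bt)| <= #|pi Bt| -> #|pi Bs| <= #|pi Bt| ->
  M \in P -> (forall x, bl (f x) != M) -> stepC f.
Proof.
move=> fT piP piI BsP BtP Bst mg dC dBs dBt le MP Mn.
have nE : pi Bs != pi Bt by apply: contra Bst => /eqP /(piI _ _ BsP BtP) ->.
have [B0 [B0' [B0P B0'P nB0 [c0 c0'] wW]]] := genW (piP _ BsP) (piP _ BtP) nE le.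
have [rho [rP rI r1 r2 rc]] := swap2 (piP _ BsP) (piP _ BtP) B0P B0'P nE nB0 (esym c0) (esym c0').
have [sg [g [sS gT hl e]]] := @reduce f (fun C => rho (pi C)) Bs Bt B0 B0' M fT
  (fun C CP => rP _ (piP _ CP)) (fun C C' CP C'P e => piI _ _ CP C'P (rI _ _ (piP _ CP) (piP _ C'P) e))
  BsP BtP Bst mg r1 r2 (fun C CP n1 n2 => leq_trans (dC C CP n1 n2) (eq_leq (esym (rc _))))
  (leq_trans dBs (eq_leq (esym c0))) (leq_trans dBt (eq_leq (esym c0'))) MP Mn.
by exists sg, (elem B0 B0'), g.
Qed.

Lemma step2 f (B1 B2 Bm M : {set X}) : f \in TXP P -> B1 \in P -> B2 \in P -> B1 != B2 ->
  fb f B1 = fb f B2 -> #|f @: B2| <= #|f @: B1| ->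
  (forall C C', C \in P -> C' \in P -> C != C' -> fb f C = fb f C' -> #|C| <= #|Bm|) ->
  (Bm = B1 \/ Bm = B2) -> M \in P -> (forall x, bl (f x) != M) -> stepC f.
Proof.
move=> fT B1P B2P B12 mg imgle maxP Bm12 MP Mn.
have [pi [piI piH]] := @assign _ (dem f B1 B2) (fun C => #|C|) #|P| P P erefl
   (threshold fT B1P B2P B12 mg imgle maxP Bm12).
have piP : {in P, forall C, pi C \in P} by move=> C /piH[].
have dle : forall C, C \in P -> dem f B1 B2 C <= #|pi C| by move=> C /piH[].
have dC : forall C, C \in P -> C != B1 -> #|f @: C| <= #|pi C|.
  by move=> C CP nC; have := dle C CP; rewrite /dem (negbTE nC).
have d1 : #|f @: (B1 :|: B2)| <= #|pi B1| by have := dle B1 B1P; rewrite /dem eqxx.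
case: (leqP #|pi B2| #|pi B1|) => hU.
  apply: (@finish f pi B2 B1 M) => //.
  - by rewrite eq_sym.
  - by move=> C CP _ n1; apply: dC.
  - by apply: dC; rewrite // eq_sym.
  - by rewrite setUC.
apply: (@finish f pi B1 B2 M) => //.
- by move=> C CP n1 _; apply: dC.
- by apply: leq_trans d1; apply: subset_leq_card; apply: imsetS; apply: subsetUl.
- exact: leq_trans d1 (ltnW hU).
- exact: ltnW.
Qed.

Lemma step f (M : {set X}) : f \in TXP P -> M \in P -> (forall x, bl (f x) != M) -> stepC f.
Proof.
move=> fT MP Mn.
have [B [B' [BP B'P nB eB maxB]]] := maxpair (merge_exists fT MP Mn).
case: (leqP #|f @: B'| #|f @: B|) => himg.
  by apply: (@step2 f B B' B M) => //; left.
apply: (@step2 f B' B B M) => //; [by rewrite eq_sym | exact: ltnW | by right].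
Qed.

Lemma upper f : f \in TXP P -> gen W f.
Proof.
move=> fT; move: {2}(#|P| - #|hits f|) (leqnn (#|P| - #|hits f|)) => n.
elim: n f fT => [|n IH] f fT hn.
  apply: gen1; rewrite inE; apply/orP; left; apply/SigmaP; split=> // B BP.
  have e : hits f = P.
    apply/eqP; rewrite eqEcard hitsP /=.
    by move: hn; rewrite leqn0 subn_eq0.
  by move: BP; rewrite -e => /imsetP[x _ ->]; exists x; apply: mem_bl.
case: (boolP [forall B in P, B \in hits f]) => [/forall_inP H|].
  apply: gen1; rewrite inE; apply/orP; left; apply/SigmaP; split=> // B BP.
  by have /imsetP[x _ ->] := H B BP; exists x; apply: mem_bl.
case/forall_inPn => M MP Mh.
have Mn : forall x, bl (f x) != M.
  by move=> x; apply/eqP => e; move/negP: Mh; apply; apply/imsetP; exists x.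
have [sg [w [g [sS wW gT hl ->]]]] := step fT MP Mn.
apply: gen_comp; first by apply: gen_comp; apply: gen1; rewrite inE ?sS ?wW ?orbT.
apply: IH gT _.
have hg : #|hits g| <= #|P| by apply: subset_leq_card; apply: hitsP.
lia.
Qed.
End Upper.

Definition sz (C : {set X}) : 'I_(#|X|.+1) := inord #|C|.

Lemma szK C : sz C = #|C| :> nat.
Proof. by rewrite inordK // ltnS max_card. Qed.

Definition inS (A : {set 'I_(#|X|.+1)}) (f : {ffun X -> X}) : Prop :=
  [/\ f \in TXP P, (forall C, C \in P -> {in C &, injective f}) &
   exists B, exists B', [/\ B \in P, B' \in P, B != B', A = [set sz B; sz B'] &
     (fb f B = fb f B' /\ forall C C', C \in P -> C' \in P -> C != C' -> fb f C = fb f C' ->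
        (C = B /\ C' = B') \/ (C = B' /\ C' = B))]].

Lemma fb_comp g h C : h \in TXP P -> fb (comp g h) C = fb h (fb g C).
Proof. by move=> hT; rewrite /fb compE -/(bl (g (repr C))) -/(fb h _) fbE. Qed.

Lemma inj_of_noI g : ~~ [exists C in P, exists C' in P, (C != C') && (fb g C == fb g C')] ->
  {in P &, injective (fb g)}.
Proof.
move=> nI C C' CP C'P e; apply/eqP; apply/negPn/negP => nCC.
by move/negP: nI; apply; apply/exists_inP; exists C => //; apply/exists_inP; exists C' => //; rewrite nCC e eqxx.
Qed.

Lemma factor A g h : g \in TXP P -> h \in TXP P -> inS A (comp g h) -> inS A g \/ inS A h.
Proof.
move=> gT hT [fT finj [B [B' [BP B'P nB eA [mB uB]]]]].
have ginj : forall C, C \in P -> {in C &, injective g}.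
  by move=> C CP x y xC yC e; apply: (finj C) => //; rewrite !compE e.
case: (boolP [exists C in P, exists C' in P, (C != C') && (fb g C == fb g C')]).
  case/exists_inP => C CP /exists_inP [C' C'P /andP[nC /eqP e]].
  left; split=> //; exists B, B'; split=> //; split.
    have : fb (comp g h) C = fb (comp g h) C' by rewrite !fb_comp // e.
    by case/(uB C C' CP C'P nC) => [[<- <-]|[<- <-]].
  by move=> D D' DP D'P nD eD; apply: uB => //; rewrite !fb_comp // eD.
move/inj_of_noI => fbinj; right.
have gbl : forall x, bl (g x) = fb g (bl x) by move=> x; rewrite fbE.
have gi : injective g.
  move=> x y e; have exy : bl x = bl y by apply: fbinj; rewrite ?blP // -!gbl e.
  by apply: (finj (bl x)); rewrite ?blP ?mem_bl // ?exy ?mem_bl // !compE e.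
have gsurj : forall y, exists x, y = g x.
  have e : g @: [set: X] = [set: X].
    by apply/eqP; rewrite eqEcard subsetT /= card_imset.
  move=> y; have : y \in g @: [set: X] by rewrite e inE.
  by case/imsetP=> x _ ->; exists x.
have img : forall C, C \in P -> fb g C = g @: C.
  move=> C CP; apply/eqP; rewrite eqEsubset imset_fb // andbT; apply/subsetP => y yC.
  have [x ex] := gsurj y; rewrite ex imset_f //.
  rewrite inC_bl //; apply/eqP/fbinj; rewrite ?blP // -gbl -ex.
  by apply: bl_eq yC; rewrite fbP.
have cardfb : forall C, C \in P -> #|fb g C| = #|C| by move=> C CP; rewrite img // card_imset.
split=> //.
  move=> E EP y y' yE y'E e.
  have [x ex] := gsurj y; have [x' ex'] := gsurj y'.
  have exx : bl x = bl x'.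
    apply: fbinj; rewrite ?blP // -!gbl -ex -ex'.
    by rewrite (bl_eq EP yE) (bl_eq EP y'E).
  rewrite ex ex'; suff -> : x = x' by []; apply: (finj (bl x)); rewrite ?blP ?mem_bl // ?exx ?mem_bl //.
  by rewrite !compE -ex -ex'.
exists (fb g B), (fb g B'); split; rewrite ?fbP //.
- by apply: contra nB => /eqP /fbinj -> //.
- by rewrite eA /sz !cardfb.
split; first by rewrite -!fb_comp.
move=> D D' DP D'P nD eD.
have [C CP eC] := imP_surj (fun C _ => fbP g C) fbinj DP.
have [C' C'P eC'] := imP_surj (fun C _ => fbP g C) fbinj D'P.
have nC : C != C' by apply: contra nD => /eqP e; rewrite eC eC' e.
have : fb (comp g h) C = fb (comp g h) C' by rewrite !fb_comp // -eC -eC'.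
by case/(uB C C' CP C'P nC) => [[e1 e2]|[e1 e2]]; [left|right]; rewrite eC eC' e1 e2.
Qed.

Lemma noSigma A f : inS A f -> f \notin SigmaXP P.
Proof.
move=> [fT _ [B [B' [BP B'P nB _ [mB _]]]]]; apply/negP => /SigmaP[_ H].
have sP : P \subset fb f @: P.
  apply/subsetP => C CP; have [x fx] := H C CP.
  by apply/imsetP; exists (bl x); rewrite ?blP // fbE // (bl_eq CP fx).
have : #|fb f @: P| == #|P| by rewrite eqn_leq leq_imset_card subset_leq_card.
by move/imset_injP => inj; move/negP: nB; apply; apply/eqP/inj.
Qed.

Lemma seq_T (s : seq {ffun X -> X}) : all (fun g => g \in TXP P) s -> seq_comp s \in TXP P.
Proof.
elim: s => [|g s IH] /=; first by move=> _; apply/TP => x y; rewrite !ffunE.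
by case/andP => gT /IH; apply: comp_T.
Qed.

Lemma seqS A (W : {set {ffun X -> X}}) s : W \subset TXP P -> all (fun g => g \in SigmaXP P :|: W) s ->
  s != [::] -> inS A (seq_comp s) -> exists2 w, w \in W & inS A w.
Proof.
move=> WT; elim: s => // g s IH; rewrite [all _ _]/= => /andP[gin sin] _.
have gT : g \in TXP P by case/setUP: gin => [/Sigma_T|/(subsetP WT)].
have hw : forall w, w \in SigmaXP P :|: W -> inS A w -> exists2 w, w \in W & inS A w.
  move=> w win wS; case/setUP: win => [wSig|wW]; last by exists w.
  by move: (noSigma wS); rewrite wSig.
case: s IH sin => [|g' s] IH sin.
  by rewrite seq_comp1; apply: hw.
rewrite seq_comp_cons => /factor.
have sT : seq_comp (g' :: s) \in TXP P.
  apply: seq_T; apply/allP => z zs; have := allP sin z zs.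
  by case/setUP => [/Sigma_T|/(subsetP WT)].
case/(_ gT sT) => [gS|sS]; first exact: hw gin gS.
exact: IH.
Qed.

Lemma disjS A A' f : inS A f -> inS A' f -> A = A'.
Proof.
move=> [_ _ [B [B' [BP B'P nB eA [mB uB]]]]] [_ _ [C [C' [CP C'P nC eA' [mC _]]]]].
rewrite eA eA'; by case: (uB C C' CP C'P nC mC) => [[-> ->]|[-> ->]]; rewrite // setUC.
Qed.

Lemma elem_in (B0 B0' : {set X}) y : #|B0| <= #|B0'| -> y \in B0 -> elem B0 B0' y \in B0'.
Proof.
move=> le yB; rewrite ffunE yB -mem_enum; apply: mem_nth; rewrite -cardE.
by apply: leq_trans le; rewrite cardE index_mem mem_enum.
Qed.

Lemma elem_out (B0 B0' : {set X}) y : y \notin B0 -> elem B0 B0' y = y.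
Proof. by rewrite ffunE => /negbTE ->. Qed.

Lemma elem_inS (B0 B0' : {set X}) : B0 \in P -> B0' \in P -> B0 != B0' -> #|B0| <= #|B0'| ->
  inS [set sz B0; sz B0'] (elem B0 B0').
Proof.
move=> B0P B0'P nB le.
have bl_el : forall y, bl (elem B0 B0' y) = if y \in B0 then B0' else bl y.
  move=> y; case: ifP => yB; first exact: bl_eq B0'P (elem_in le yB).
  by rewrite elem_out ?yB.
have fbel : forall C, C \in P -> fb (elem B0 B0') C = if C == B0 then B0' else C.
  by move=> C CP; rewrite /fb bl_el (inC_bl _ B0P) bl_repr.
split.
- apply/TP => x y e; rewrite !bl_el (inC_bl x B0P) (inC_bl y B0P) e.
  by case: ifP.
- move=> C CP x y xC yC; case: (boolP (C == B0)) => [/eqP eC|nC].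
    rewrite eC in xC yC; rewrite !ffunE xC yC => e.
    have lx : index x (enum B0) < size (enum B0') by rewrite -cardE; apply: leq_trans le; rewrite cardE index_mem mem_enum.
    have ly : index y (enum B0) < size (enum B0') by rewrite -cardE; apply: leq_trans le; rewrite cardE index_mem mem_enum.
    have := congr1 (index^~ (enum B0')) e; rewrite /= !index_uniq ?enum_uniq // => ei.
    by rewrite -(nth_index x (_ : x \in enum B0)) ?mem_enum // ei nth_index ?mem_enum.
  have xn : x \notin B0 by rewrite (inC_bl x B0P) (bl_eq CP xC).
  have yn : y \notin B0 by rewrite (inC_bl y B0P) (bl_eq CP yC).
  by rewrite !elem_out.
exists B0, B0'; split=> //; split.
  by rewrite !fbel // eqxx eq_sym (negbTE nB).
move=> C C' CP C'P nC; rewrite !fbel //.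
case: (boolP (C == B0)) => [/eqP eC|n1]; case: (boolP (C' == B0)) => [/eqP eC'|n2].
- by rewrite eC eC' eqxx in nC.
- by move=> e; left; split.
- by move=> e; right; split.
by move=> e; rewrite e eqxx in nC.
Qed.

Definition PiS : {set {set 'I_(#|X|.+1)}} := [set A : {set 'I_(#|X|.+1)} |
  [exists B in P, exists B' in P, (B != B') && (A == [set sz B; sz B'])]].

Lemma mem_bs m : (m \in block_sizes P) = [exists B in P, #|B| == m].
Proof.
rewrite /block_sizes mem_undup; apply/mapP/exists_inP => [[B BP ->]|[B BP /eqP <-]].
  by exists B; rewrite // -mem_enum.
by exists B; rewrite // mem_enum.
Qed.

Definition SZ := [set z : 'I_(#|X|.+1) | nat_of_ord z \in block_sizes P].
Definition RZ := [set z : 'I_(#|X|.+1) | nat_of_ord z \in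
   [seq m <- block_sizes P | 1 < #|[set B in P | #|B| == m]|]].

Lemma bs_all : all (fun m => m < #|X|.+1) (block_sizes P).
Proof.
apply/allP => m; rewrite mem_bs => /exists_inP[B _ /eqP <-].
by rewrite ltnS max_card.
Qed.

Lemma card_SZ : #|SZ| = size (block_sizes P).
Proof. by rewrite card_val_seq ?undup_uniq ?bs_all. Qed.

Lemma card_RZ : #|RZ| = repeated_sizes P.
Proof.
rewrite card_val_seq // ?filter_uniq ?undup_uniq //.
by apply/allP => m; rewrite mem_filter => /andP[_ mb]; apply: (allP bs_all).
Qed.

Lemma inSZ z : reflect (exists2 B, B \in P & sz B = z) (z \in SZ).
Proof.
rewrite inE mem_bs; apply: (iffP exists_inP) => [[B BP /eqP e]|[B BP <-]].
  by exists B => //; apply: val_inj; rewrite /= szK.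
by exists B; rewrite // szK.
Qed.

Lemma sz_eq B C : (sz B == sz C) = (#|B| == #|C|).
Proof. by rewrite -val_eqE /= !szK. Qed.

Lemma card_PiS : #|PiS| = 'C(size (block_sizes P), 2) + repeated_sizes P.
Proof.
set Pi1 := [set A : {set 'I_(#|X|.+1)} | A \subset SZ & #|A| == 2].
set Pi2 := [set [set z] | z in RZ].
have e : PiS = Pi1 :|: Pi2.
  apply/setP => A; rewrite !inE; apply/idP/idP.
    case/exists_inP => B BP /exists_inP[B' B'P /andP[nB /eqP ->]].
    case: (boolP (sz B == sz B')) => [/eqP e|ne].
      apply/orP; right; apply/imsetP; exists (sz B); last by rewrite -e setUid.
      rewrite inE mem_filter szK; apply/andP; split; last first.
        by rewrite mem_bs; apply/exists_inP; exists B.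
      apply: (@leq_trans #|[set B; B']|); first by rewrite cards2 nB.
      apply: subset_leq_card; apply/subsetP => C; rewrite !inE => /orP[]/eqP->; rewrite ?BP ?B'P //=.
      by rewrite -sz_eq e.
    apply/orP; left; rewrite cards2 ne andbT; apply/subsetP => z /set2P[]->.
      by apply/inSZ; exists B.
    by apply/inSZ; exists B'.
  case/orP => [/andP[sA /cards2P[a [b [nab eA]]]]|/imsetP[z zR ->]].
    have /inSZ[B BP eB] : a \in SZ by apply: (subsetP sA); rewrite eA !inE eqxx.
    have /inSZ[B' B'P eB'] : b \in SZ by apply: (subsetP sA); rewrite eA !inE eqxx orbT.
    apply/exists_inP; exists B => //; apply/exists_inP; exists B' => //.
    rewrite eA eB eB' eqxx andbT; apply: contra nab => /eqP eBB.
    by rewrite -eB -eB' eBB.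
  move: zR; rewrite inE mem_filter => /andP[/card_gt1P [B [B' [BP B'P nB]]] _].
  move: BP B'P; rewrite !inE => /andP[BP /eqP eB] /andP[B'P /eqP eB'].
  apply/exists_inP; exists B => //; apply/exists_inP; exists B' => //; rewrite nB /=.
  have zB : sz B = z by apply: val_inj; rewrite /= szK.
  have zB' : sz B' = z by apply: val_inj; rewrite /= szK.
  by rewrite zB zB' setUid.
rewrite e cardsU.
have -> : #|Pi1 :&: Pi2| = 0.
  apply: eq_card0 => A; rewrite !inE; apply/negP => /andP[/andP[_ cA] /imsetP[z _ eA]].
  by move: cA; rewrite eA cards1.
rewrite subn0 cards_draws card_SZ; congr (_ + _).
by rewrite card_in_imset ?card_RZ //; move=> a b _ _; apply: set1_inj.
Qed.

Lemma pair_eq n (a b c d : 'I_n) : a <= b -> c <= d -> [set a; b] = [set c; d] -> a = c /\ b = d.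
Proof.
move=> lab lcd e.
have ha : a \in [set c; d] by rewrite -e set21.
have hb : b \in [set c; d] by rewrite -e set22.
have hc : c \in [set a; b] by rewrite e set21.
have hd : d \in [set a; b] by rewrite e set22.
move/set2P: ha => [] ha; move/set2P: hb => [] hb; move/set2P: hc => [] hc; move/set2P: hd => [] hd;
  subst; split => //; apply: ord_inj; lia.
Qed.

Definition repA (A : {set 'I_(#|X|.+1)}) := [pick p : {set X} * {set X} |
  [&& p.1 \in P, p.2 \in P, p.1 != p.2, #|p.1| <= #|p.2| & A == [set sz p.1; sz p.2]]].

Definition genA A : {ffun X -> X} := if repA A is Some p then elem p.1 p.2 else [ffun x => x].

Definition W0 := genA @: PiS.

Lemma genA_spec A : A \in PiS -> exists B0, exists B0', [/\ B0 \in P, B0' \in P, B0 != B0',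
  (#|B0| <= #|B0'| /\ A = [set sz B0; sz B0']) & genA A = elem B0 B0'].
Proof.
rewrite inE => /exists_inP[B BP /exists_inP[B' B'P /andP[nB /eqP eA]]].
rewrite /genA /repA; case: pickP => [[C C'] /= /and5P[CP C'P nC le /eqP eC]|H].
  by exists C, C'; split.
case: (leqP #|B| #|B'|) => le.
  by move: (H (B, B')); rewrite /= BP B'P nB le eA eqxx.
by move: (H (B', B)); rewrite /= BP B'P eq_sym nB (ltnW le) eA setUC eqxx.
Qed.

Lemma genA_T A : genA A \in TXP P.
Proof.
rewrite /genA /repA; case: pickP => [[C C'] /= /and5P[CP C'P nC le _]|_].
  by case: (elem_inS CP C'P nC le).
by apply/TP => x y; rewrite !ffunE.
Qed.

Lemma W0T : W0 \subset TXP P.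
Proof. by apply/subsetP => w /imsetP[A _ ->]; apply: genA_T. Qed.

Lemma genW0 : forall E E', E \in P -> E' \in P -> E != E' -> #|E| <= #|E'| ->
  exists B0, exists B0', [/\ B0 \in P, B0' \in P, B0 != B0', (#|B0| = #|E| /\ #|B0'| = #|E'|) &
    elem B0 B0' \in W0].
Proof.
move=> E E' EP E'P nE le.
have AP : [set sz E; sz E'] \in PiS.
  by rewrite inE; apply/exists_inP; exists E => //; apply/exists_inP; exists E' => //; rewrite nE eqxx.
have [B0 [B0' [B0P B0'P nB [le0 eA] eg]]] := genA_spec AP.
have l1 : sz B0 <= sz B0' by rewrite !szK.
have l2 : sz E <= sz E' by rewrite !szK.
have [e1 e2] := pair_eq l1 l2 (esym eA).
exists B0, B0'; split=> //.
  by split; apply/eqP; rewrite -sz_eq ?e1 ?e2.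
by rewrite -eg; apply: imset_f.
Qed.

Definition inSb A f : bool := if excluded_middle_informative (inS A f) then true else false.

Lemma inSbP A f : reflect (inS A f) (inSb A f).
Proof. by rewrite /inSb; case: excluded_middle_informative => h; constructor. Qed.

Lemma lower (W : {set {ffun X -> X}}) : W \subset TXP P ->
  (forall f, f \in TXP P <-> gen W f) -> #|PiS| <= #|W|.
Proof.
move=> WT gW.
have ex : forall A, A \in PiS -> exists2 w, w \in W & inS A w.
  move=> A AP; have [B0 [B0' [B0P B0'P nB [le eA] eg]]] := genA_spec AP.
  have iS : inS A (genA A) by rewrite eg eA; apply: elem_inS.
  have [s [sn sa se]] := (gW (genA A)).1 (genA_T A).
  by apply: (@seqS A W s) => //; rewrite -se.
pose phi A := if [pick w in W | inSb A w] is Some w then w else genA A.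
have phiP : forall A, A \in PiS -> phi A \in W /\ inS A (phi A).
  move=> A AP; rewrite /phi; case: pickP => [w /andP[wW /inSbP wS]|H] //.
  have [w wW wS] := ex A AP; move: (H w); rewrite wW /=.
  by case: inSbP.
have inj : {in PiS &, injective phi}.
  move=> A A' AP A'P e; have [_ h1] := phiP A AP; have [_ h2] := phiP A' A'P.
  by apply: disjS h1 _; rewrite e.
rewrite -(card_in_imset inj); apply: subset_leq_card; apply/subsetP => w /imsetP[A AP ->].
by have [] := phiP A AP.
Qed.

Lemma main_thm : relative_rank_eq (TXP P) (SigmaXP P) ('C(size (block_sizes P), 2) + repeated_sizes P).
Proof.
rewrite -card_PiS.
have gen0 : generates_with (TXP P) (SigmaXP P) W0.
  move=> f; split; first exact: (upper genW0).
  exact: gen_T W0T.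
split; last by move=> W WT gW; apply: lower.
exists W0; split=> //; first exact: W0T.
apply/eqP; rewrite eqn_leq leq_imset_card /=.
by apply: lower; [exact: W0T | exact: gen0].
Qed.

End Basics.

Theorem theorem3p3 (X : finType) (P : {set {set X}}) :
  0 < #|X| -> partition P [set: X] ->
  relative_rank_eq (TXP P) (SigmaXP P)
    ('C(size (block_sizes P), 2) + repeated_sizes P).
Proof.
move=> hX hP; have [x0 _] := card_gt0P hX.
exact: (main_thm hP x0).
Qed.
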